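(* Let $n,m,c$ be positive integers and $r,s,R,S$ nonnegative integers with $R\le n$, $S\le m$. Let $\alpha\in\mathrm{Par}(R,r)$, $\beta\in\mathrm{Par}(S,s)$, $\lambda\in\mathrm{Par}(n-R,c)$ and $\mu\in\mathrm{Par}(m-S,c)$. Then \[ X(q) = \frac{[(n-R)(m-S)]_q}{[c]_q} \begin{bmatrix}n\\ r\end{bmatrix}_q\begin{bmatrix}m\\ s\end{bmatrix}_q \begin{bmatrix}r\\ \alpha\end{bmatrix}_q \begin{bmatrix}s\\ \beta\end{bmatrix}_q \begin{bmatrix}c\\ \lambda\end{bmatrix}_q \begin{bmatrix}c\\ \mu\end{bmatrix}_q \] is a polynomial in $q$.
   Context: $\mathrm{Par}(N,k)$ is the set of integer partitions of $N$ with $k$ parts. Write $\lambda=(1^{m_1},2^{m_2},\dots)$ if $\lambda$ has $m_i$ parts equal to $i$. The $q$-notation is $[N]_q=(1-q^N)/(1-q)$, $[N]_q!=[1]_q\cdots[N]_q$, $\begin{bmatrix}N\\k\end{bmatrix}_q=\frac{[N]_q!}{[k]_q![N-k]_q!}$, and, for $\lambda$ with $k$ parts, $\begin{bmatrix}k\\ \lambda\end{bmatrix}_q=\frac{[k]_q!}{[m_1]_q![m_2]_q!\cdots}$. *)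

(* Defs.v *)
From HB Require Import structures.
From mathcomp Require Import all_boot all_order all_algebra.
From mathcomp Require Import fraction.
Set Implicit Arguments. Unset Strict Implicit. Unset Printing Implicit Defensive.
Import Order.TTheory GRing.Theory Num.Theory.
Local Open Scope ring_scope.

Definition is_par (N k : nat) (l : seq nat) : bool :=
  [&& sorted geq l, all (fun x => 0 < x)%N l, size l == k & sumn l == N].

(* [N]_q = 1 + q + ... + q^(N-1) = (1 - q^N)/(1 - q) as an integer polynomial *)
Definition qint (N : nat) : {poly int} := \sum_(i < N) 'X^i.

Definition qfact (N : nat) : {poly int} := \prod_(1 <= i < N.+1) qint i.

Notation qfrac := {fraction {poly int}}.
Notation "x %:F" := (@FracField.tofrac _ x) : ring_scope.

Definition qbinom (N k : nat) : qfrac :=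
  (qfact N)%:F / ((qfact k)%:F * (qfact (N - k))%:F).

(* q-multinomial [k; lambda]_q = [k]_q! / prod_i [m_i]_q!, where m_i is the
   multiplicity of the part i in lambda (parts with m_i = 0 contribute 1). *)
Definition qmultinom (k : nat) (l : seq nat) : qfrac :=
  (qfact k)%:F / \prod_(i <- undup l) (qfact (count_mem i l))%:F.

(* Main.v *)
Require Import Defs.
From HB Require Import structures.
From mathcomp Require Import all_boot all_order all_algebra.
From mathcomp Require Import fraction.
From mathcomp Require Import ring.
Import Order.TTheory GRing.Theory Num.Theory.
Local Open Scope ring_scope.

Lemma qint0 : qint 0 = 0.
Proof. by rewrite /qint big_ord0. Qed.

Lemma qintD a b : qint (a + b) = qint a + 'X^a * qint b.
Proof.
rewrite /qint big_split_ord /= mulr_sumr; congr (_ + _).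
by apply: eq_bigr => i _; rewrite exprD.
Qed.

Lemma qint_neq0 k : (0 < k)%N -> qint k != 0.
Proof.
move=> k0; apply/eqP => /(congr1 (horner^~ 1)).
rewrite /qint horner_sum hornerC.
under eq_bigr => i _ do rewrite hornerXn expr1n.
rewrite sumr_const card_ord => /eqP; rewrite pnatr_eq0 => /eqP k0'.
by rewrite k0' in k0.
Qed.


Lemma qfactS k : qfact k.+1 = qfact k * qint k.+1.
Proof. by rewrite /qfact big_nat_recr. Qed.

Lemma qfact_neq0 k : qfact k != 0.
Proof.
elim: k => [|k IH]; first by rewrite /qfact big_geq // oner_eq0.
by rewrite qfactS mulf_neq0 // qint_neq0.
Qed.

Fixpoint G (n k : nat) : {poly int} :=
  match n, k with
  | _, 0 => 1
  | 0, _.+1 => 0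
  | n'.+1, k'.+1 => G n' k' + 'X^(k'.+1) * G n' k'.+1
  end.

Lemma G_gt n k : (n < k)%N -> G n k = 0.
Proof.
elim: n k => [|n IH] [|k] //= H.
by rewrite !IH ?mulr0 ?addr0 // ltnW.
Qed.

Lemma G_fact n k : (k <= n)%N -> G n k * qfact k * qfact (n - k) = qfact n.
Proof.
elim: n k => [|n IH] [|k] //=.
- by rewrite /qfact big_geq // !mulr1.
- by rewrite subn0 mul1r /qfact big_geq // mul1r.
move=> kn.
have E : 'X^(k.+1) * G n k.+1 * qfact k.+1 * qfact (n - k) =
         'X^(k.+1) * qint (n - k) * qfact n.
  case: (ltnP k n) => [kn'|kn'].
  - rewrite -(IH _ kn') -(subnSK kn') !qfactS; ring.
  - have -> : k = n by apply/eqP; rewrite eqn_leq -ltnS kn kn'.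
    by rewrite G_gt // subnn qint0; ring.
have E2 : G n k * qfact k.+1 * qfact (n - k) = qint k.+1 * qfact n.
  by rewrite -(IH _ kn) qfactS; ring.
rewrite subSS (qfactS n).
have -> : n.+1 = (k.+1 + (n - k))%N by rewrite addSn subnKC.
rewrite qintD mulrDl mulrDl E E2; ring.
Qed.

Fixpoint Mu (ms : seq nat) : {poly int} :=
  match ms with
  | [::] => 1
  | a :: t => G (a + sumn t) a * Mu t
  end.

Lemma Mu_fact ms : Mu ms * \prod_(x <- ms) qfact x = qfact (sumn ms).
Proof.
elim: ms => [|a t IH] /=; first by rewrite big_nil mulr1 /qfact big_geq.
rewrite big_cons -(@G_fact _ _ (leq_addr (sumn t) a)) addKn -IH; ring.
Qed.

Lemma frac_div (A P B : {poly int}) : B != 0 -> A = P * B ->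
  A%:F / B%:F = P%:F :> qfrac.
Proof.
by move=> B0 ->; rewrite tofracM mulfK // tofrac_eq0.
Qed.

Lemma qbinomE n k : (k <= n)%N -> qbinom n k = (G n k)%:F.
Proof.
move=> kn; rewrite /qbinom -tofracM; apply: frac_div.
  by rewrite mulf_neq0 // qfact_neq0.
by rewrite -(@G_fact n k kn) mulrA.
Qed.

Lemma iterop_addn k x : iterop k addn x 0%N = (x * k)%N.
Proof.
case: k => [|k]; first by rewrite muln0.
rewrite iteropS; elim: k => [|k IH]; first by rewrite muln1.
by rewrite iterS IH [RHS]mulnS.
Qed.

Lemma sum_undup_count (l : seq nat) (F : nat -> nat) :
  (\sum_(i <- undup l) F i * count_mem i l = \sum_(i <- l) F i)%N.
Proof.
rewrite -[RHS]big_undup_iterop_count; apply: eq_bigr => i _.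
by rewrite iterop_addn.
Qed.

Definition cnts (l : seq nat) := [seq count_mem i l | i <- undup l].

Lemma sumn_cnts l : sumn (cnts l) = size l.
Proof.
rewrite sumnE big_map -[size l]count_predT -sum1_count.
rewrite -(sum_undup_count l (fun=> 1%N)); apply: eq_bigr => i _.
by rewrite mul1n.
Qed.

Lemma prod_cnts l : \prod_(i <- undup l) (qfact (count_mem i l))%:F
   = (\prod_(x <- cnts l) qfact x)%:F :> qfrac.
Proof. by rewrite rmorph_prod big_map. Qed.

Lemma qmultinomE k l : size l = k -> qmultinom k l = (Mu (cnts l))%:F.
Proof.
move=> <-; rewrite /qmultinom prod_cnts; apply: frac_div.
  by rewrite prodf_seq_neq0; apply/allP => i _; rewrite qfact_neq0.
by rewrite Mu_fact sumn_cnts.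
Qed.

Lemma key_count (l : seq nat) j : j \in l ->
  exists P : {poly int}, (qint (count_mem j l))%:F *
     (qmultinom (size l) l / (qint (size l))%:F) = P%:F.
Proof.
move=> jl.
have ju : j \in undup l by rewrite mem_undup.
have pc : perm_eq (cnts l) (count_mem j l :: [seq count_mem i l | i <- rem j (undup l)]).
  exact: (perm_map (fun i => count_mem i l) (perm_to_rem ju)).
set ms := [seq count_mem i l | i <- rem j (undup l)] in pc.
have : (0 < count_mem j l)%N by rewrite -has_count has_pred1.
case E : (count_mem j l) pc => [//|a] pc _.
have Hs : size l = (a + sumn ms).+1 by rewrite -sumn_cnts (perm_sumn pc).
have Hp : \prod_(x <- cnts l) qfact x = qfact a * qint a.+1 * \prod_(x <- ms) qfact x.
  by rewrite (perm_big _ pc) big_cons qfactS.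
exists (Mu (a :: ms)).
have -> : forall x y z w : qfrac, x * (y / z / w) = (x * y) / (z * w).
  by move=> x y z w; rewrite invfM; ring.
rewrite /qmultinom prod_cnts -!tofracM; apply: frac_div.
  rewrite mulf_neq0 ?qint_neq0 ?Hs //.
  by rewrite prodf_seq_neq0; apply/allP => i _; rewrite qfact_neq0.
rewrite Hp Hs qfactS -(Mu_fact (a :: ms)) /= big_cons; ring.
Qed.

Definition Sset (X : qfrac) k := exists P : {poly int}, (qint k)%:F * X = P%:F.

Lemma S0 X : Sset X 0.
Proof. by exists 0; rewrite qint0 tofrac0 mul0r. Qed.

Lemma S_add X a b : Sset X a -> Sset X b -> Sset X (a + b).
Proof.
move=> [Pa Ha] [Pb Hb]; exists (Pa + 'X^a * Pb).
by rewrite qintD !tofracD !tofracM -Ha -Hb; ring.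
Qed.

Lemma S_mul X a k : Sset X a -> Sset X (a * k).
Proof.
move=> Ha; elim: k => [|k IH]; first by rewrite muln0; apply: S0.
by rewrite mulnS; apply: S_add.
Qed.

Lemma size_le_sumn (l : seq nat) : all (fun x => 0 < x)%N l -> (size l <= sumn l)%N.
Proof.
elim: l => [//|a t IH] /= /andP [a0 /IH H].
by rewrite -addn1 addnC leq_add.
Qed.

Lemma S_sumn (l : seq nat) : Sset (qmultinom (size l) l / (qint (size l))%:F) (sumn l).
Proof.
set X := _ / _.
rewrite sumnE -(sum_undup_count l id).
have gen : forall u, all (fun i => i \in l) u ->
    Sset X (\sum_(i <- u) i * count_mem i l)%N.
  elim => [|i u IH] /=; first by rewrite big_nil => _; apply: S0.
  move=> /andP [il /IH H]; rewrite big_cons; apply: S_add => //.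
  by rewrite mulnC; apply: S_mul; apply: key_count.
by apply: gen; apply/allP => i; rewrite mem_undup.
Qed.

Theorem proposition2p8 (n m c r s R S : nat)
  (alpha beta lambda mu : seq nat) :
  (0 < n)%N -> (0 < m)%N -> (0 < c)%N ->
  (R <= n)%N -> (S <= m)%N ->
  is_par R r alpha -> is_par S s beta ->
  is_par (n - R) c lambda -> is_par (m - S) c mu ->
  exists P : {poly int},
    (qint ((n - R) * (m - S)))%:F / (qint c)%:F
      * qbinom n r * qbinom m s
      * qmultinom r alpha * qmultinom s beta
      * qmultinom c lambda * qmultinom c mu
    = P%:F.
Proof.
move=> _ _ _ Rn Sm.
move=> /and4P [_ pa /eqP sa /eqP ua] /and4P [_ pb /eqP sb /eqP ub].
move=> /and4P [_ _ /eqP sl /eqP ul] /and4P [_ _ /eqP sm _].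
have rn : (r <= n)%N by rewrite -sa (leq_trans (size_le_sumn _ pa)) // ua.
have sm' : (s <= m)%N by rewrite -sb (leq_trans (size_le_sumn _ pb)) // ub.
have [P0 HP0] : Sset (qmultinom c lambda / (qint c)%:F) ((n - R) * (m - S)).
  by apply: S_mul; rewrite -ul -sl; apply: S_sumn.
rewrite (qbinomE _ _ rn) (qbinomE _ _ sm') (qmultinomE _ _ sa) (qmultinomE _ _ sb).
rewrite (qmultinomE _ _ sm).
exists (P0 * G n r * G m s * Mu (cnts alpha) * Mu (cnts beta) * Mu (cnts mu)).
rewrite !tofracM -HP0; ring.
Qed.
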